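(* Assume the setting, utility assumptions and trading rule in the context, and assume moreover that all goods are essential for all agents, so $X_i=\mathbb{R}^{n+1}_{++}$ for every $i$. Start from initial holdings $x_i^0\in X_i$. (a) For any fixed premium levels $\delta_{ij}>0$, any sequence of bilateral trades (each executed according to the trading rule with these premiums) is finite: after finitely many trades no further bilateral trade is available. (b) Consider a process organized in stages $k=1,2,\dots$: in stage $k$ the premiums are $\delta^k_{ij}>0$, bilateral trades with these premiums are carried out (in any order) until no bilateral trade is available, after which the premiums are lowered to $\delta^{k+1}_{ij}\le\delta^k_{ij}$, with $\max_{i,j}\delta^k_{ij}\to0$ as $k\to\infty$. Then the sequences of holdings $x_i$ and price thresholds $p_{ij}(x_i)$ generated by this process converge, and their limits $\bar x_i$ form, together with prices $\bar p_j$, an equilibrium of prices and holdings (each $\bar x_i$ maximizes $u_i$ over $X_i$ subject to $x_{i0}+\sum_{j=1}^n\bar p_jx_{ij}=\bar x_{i0}+\sum_{j=1}^n\bar p_j\bar x_{ij}$), where moreover $p_{ij}(\bar x_i)=\bar p_j$ for every good $j\ne0$ and every agent $i$.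
   Context: There are goods $j=0,1,\dots,n$, good $0$ being money, and agents $i=1,\dots,m$; agent $i$ holds $x_i=(x_{i0},\dots,x_{in})$. Utility assumptions: $u_i$ is concave and twice continuously differentiable on $X_i$; $\nabla u_i(x_i)$ has all components positive; $\nabla^2u_i(x_i)$ is negative definite on the subspace orthogonal to $\nabla u_i(x_i)$; for every $x_i\in X_i$ the set $\{x_i'\in X_i:u_i(x_i')\ge u_i(x_i)\}$ is closed in $\mathbb{R}^{n+1}$. Price threshold: $p_{ij}(x_i)=\frac{\partial u_i}{\partial x_{ij}}(x_i)/\frac{\partial u_i}{\partial x_{i0}}(x_i)$ for $j\ne0$. Notation: $[\pi_j,-1]$ is the vector in $\mathbb{R}^{n+1}$ with component $0$ equal to $\pi_j$, component $j$ equal to $-1$, other components $0$. For $\pi_j>0$ define $\xi^+_j(x_i,\pi_j)=\operatorname{argmax}\{u_i(x_i+\xi[\pi_j,-1]):\xi\ge0,\ x_i+\xi[\pi_j,-1]\in X_i\}$ and $\xi^-_j(x_i,\pi_j)=\operatorname{argmax}\{u_i(x_i-\xi[\pi_j,-1]):\xi\ge0,\ x_i-\xi[\pi_j,-1]\in X_i\}$. Each agent $i$ has for each good $j\ne0$ a premium $\delta_{ij}>0$, and sets selling and buying prices $p^+_{ij}(x_i)=p_{ij}(x_i)+\delta_{ij}$, $p^-_{ij}(x_i)=p_{ij}(x_i)-\delta_{ij}$. Bilateral trade: a trade in good $j\ne0$ between seller $i_1$ and buyer $i_2$ at price $\pi_j$ is available if $x_{i_1j}>0$, $p^+_{i_1j}(x_{i_1})\le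 p^-_{i_2j}(x_{i_2})$ and $\pi_j\in[p^+_{i_1j}(x_{i_1}),p^-_{i_2j}(x_{i_2})]$; executing it transfers the amount $\xi_j=\min\{\xi^+_j(x_{i_1},\pi_j),\xi^-_j(x_{i_2},\pi_j)\}$ of good $j$ from $i_1$ to $i_2$ and the money amount $\pi_j\xi_j$ from $i_2$ to $i_1$, i.e. $x'_{i_1}=x_{i_1}+\xi_j[\pi_j,-1]$, $x'_{i_2}=x_{i_2}-\xi_j[\pi_j,-1]$, other agents' holdings unchanged. *)

(* Defs.v *)
(* MathComp + MathComp-Analysis, reals R : realType.
   Goods are indexed by 'I_(n.+1) (good ord0 = money), agents by 'I_m.
   A bundle is a row vector 'rV[R]_(n.+1); its component j is x 0 j. *)
From HB Require Import structures.
From mathcomp Require Import all_boot all_order all_algebra.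
From mathcomp Require Import all_classical all_reals all_analysis.
Set Implicit Arguments. Unset Strict Implicit. Unset Printing Implicit Defensive.
Import Order.TTheory GRing.Theory Num.Theory.
Import numFieldNormedType.Exports.
Local Open Scope classical_set_scope.
Local Open Scope ring_scope.

Section Defs.
Variables (R : realType) (n m : nat).

Definition bundle := 'rV[R]_(n.+1).

Definition Xpos : set bundle := [set x | forall j : 'I_(n.+1), 0 < x 0 j].

Definition unitv (j : 'I_(n.+1)) : bundle := \row_k (if k == j then 1 else 0).

Definition partial (f : bundle -> R) (j : 'I_(n.+1)) (x : bundle) : R :=
  'D_(unitv j) f x.

Definition C2_on (f : bundle -> R) : Prop :=
  forall x, Xpos x ->
    [/\ continuous_at x f,
        forall j, derivable f x (unitv j),
        forall j, {for x, continuous (partial f j)},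
        forall j k, derivable (partial f j) x (unitv k)
      & forall j k, {for x, continuous (partial (partial f j) k)}].

Definition concave_on (f : bundle -> R) : Prop :=
  forall x y (t : R), Xpos x -> Xpos y -> 0 <= t <= 1 ->
    t * f x + (1 - t) * f y <= f (t *: x + (1 - t) *: y).

Definition utility_assumptions (u : bundle -> R) : Prop :=
  [/\ concave_on u,
      C2_on u,
      (forall x, Xpos x -> forall j, 0 < partial u j x),
      (forall x, Xpos x -> forall v : bundle, v != 0 ->
         \sum_(j < n.+1) v 0 j * partial u j x = 0 ->
         \sum_(j < n.+1) \sum_(k < n.+1)
            v 0 j * v 0 k * partial (partial u j) k x < 0)
    &
      (forall x, Xpos x -> closed [set x' | Xpos x' /\ u x <= u x'])].

Definition pthr (u : bundle -> R) (x : bundle) (j : 'I_(n.+1)) : R :=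
  partial u j x / partial u ord0 x.

Definition dirv (pi : R) (j : 'I_(n.+1)) : bundle :=
  \row_k (if k == ord0 then pi else if k == j then -1 else 0).

Definition is_argmax_dir (u : bundle -> R) (x d : bundle) (xi : R) : Prop :=
  [/\ 0 <= xi, Xpos (x + xi *: d) &
      forall xi', 0 <= xi' -> Xpos (x + xi' *: d) ->
        u (x + xi' *: d) <= u (x + xi *: d)].

Definition is_xi_plus u x j pi xi := is_argmax_dir u x (dirv pi j) xi.
Definition is_xi_minus u x j pi xi := is_argmax_dir u x (- dirv pi j) xi.

Definition state := 'I_m -> bundle.
Definition premiums := 'I_m -> 'I_(n.+1) -> R.

Definition psell (u : 'I_m -> bundle -> R) (delta : premiums) (x : state) i j :=
  pthr (u i) (x i) j + delta i j.
Definition pbuy (u : 'I_m -> bundle -> R) (delta : premiums) (x : state) i j :=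
  pthr (u i) (x i) j - delta i j.

Definition trade_avail (u : 'I_m -> bundle -> R) (delta : premiums) (x : state)
    (i1 i2 : 'I_m) (j : 'I_(n.+1)) (pi : R) : Prop :=
  [/\ i1 != i2, j != ord0, 0 < x i1 0 j,
      psell u delta x i1 j <= pbuy u delta x i2 j
    & psell u delta x i1 j <= pi <= pbuy u delta x i2 j].

Definition some_trade_avail u delta x : Prop :=
  exists i1 i2 j pi, trade_avail u delta x i1 i2 j pi.

Definition trade_step (u : 'I_m -> bundle -> R) (delta : premiums) (x y : state) : Prop :=
  exists i1 i2 j pi xp xm,
    [/\ trade_avail u delta x i1 i2 j pi,
        is_xi_plus (u i1) (x i1) j pi xp,
        is_xi_minus (u i2) (x i2) j pi xm
      & y = (fun i => if i == i1 then x i1 + Num.min xp xm *: dirv pi j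
                      else if i == i2 then x i2 - Num.min xp xm *: dirv pi j
                      else x i)].

Definition maxprem (delta : premiums) : R :=
  \big[Num.max/0]_(i < m) \big[Num.max/0]_(j < n.+1 | j != ord0) delta i j.

(* The staged process: s t is the holding profile after step t, sg t the
   current stage. *)
Definition staged_process (u : 'I_m -> bundle -> R) (delta : nat -> premiums)
    (x0 : state) (s : nat -> state) (sg : nat -> nat) : Prop :=
  [/\ s 0%N = x0, sg 0%N = 0%N &
      forall t, (sg t.+1 = sg t /\ trade_step u (delta (sg t)) (s t) (s t.+1)) \/
                [/\ ~ some_trade_avail u (delta (sg t)) (s t),
                    sg t.+1 = (sg t).+1 & s t.+1 = s t]].

Definition budget (p : 'I_(n.+1) -> R) (x : bundle) : R :=
  x 0 ord0 + \sum_(j < n.+1 | j != ord0) p j * x 0 j.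

Definition equilibrium (u : 'I_m -> bundle -> R) (xbar : state)
    (pbar : 'I_(n.+1) -> R) : Prop :=
  forall i, Xpos (xbar i) /\
    forall x, Xpos x -> budget pbar x = budget pbar (xbar i) -> u i x <= u i (xbar i).

End Defs.

(* Main.v *)
Require Import Defs.
From HB Require Import structures.
From mathcomp Require Import all_boot all_order all_algebra.
From mathcomp Require Import all_classical all_reals all_analysis.
From mathcomp Require Import ring lra.
Import Order.TTheory GRing.Theory Num.Theory.
Import numFieldNormedType.Exports.
Local Open Scope classical_set_scope.
Local Open Scope ring_scope.

Set Implicit Arguments. Unset Strict Implicit. Unset Printing Implicit Defensive.


#[global] Instance bundle_nbhs_pfilter (R : realType) (n : nat) (x : bundle R n) :
  ProperFilter (nbhs x) := nbhs_pfilter x.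
#[global] Instance bundle_nbhs_filter (R : realType) (n : nat) (x : bundle R n) :
  Filter (nbhs x) := nbhs_filter x.

Section F1.
Variables (R : realType) (n : nat).
Local Notation B := (bundle R n).

Lemma unitvE (j k : 'I_n.+1) : unitv R j 0 k = (k == j)%:R.
Proof. by rewrite mxE; case: eqP. Qed.

Lemma coord_is_derive (f : B -> R) (y : B) k (t : R) :
  derivable f (y + t *: unitv R k) (unitv R k) ->
  is_derive t 1 (fun s : R => f (y + s *: unitv R k)) (partial f k (y + t *: unitv R k)).
Proof.
move=> df.
have E : (fun h : R => h^-1 *: (((fun s => f (y + s *: unitv R k)) \o shift t) (h *: 1) - f (y + t *: unitv R k))) = (fun h => h^-1 *: ((f \o shift (y + t *: unitv R k)) (h *: unitv R k) - f (y + t *: unitv R k))).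
  apply/funext => h /=; congr (_ *: (f _ - _)).
  by rewrite /shift /= [h *: 1]mulr1 scalerDl addrCA.
split; first by rewrite /derivable E; exact: df.
by rewrite /derive E.
Qed.

Lemma itv_abs (a t : R) : (0 <= a -> 0 <= t <= a) \/ (a < 0 -> a <= t <= 0) -> True.
Proof. by []. Qed.

Lemma mvt_coord (f : B -> R) (y : B) k (a : R) :
  (forall t, `|t| <= `|a| -> Xpos (y + t *: unitv R k)) ->
  (forall z, Xpos z -> derivable f z (unitv R k)) ->
  exists2 th, `|th| <= `|a| &
    f (y + a *: unitv R k) - f y = a * partial f k (y + th *: unitv R k).
Proof.
move=> Hx Hd.
pose g := fun s : R => f (y + s *: unitv R k).
have gd : forall t : R, `|t| <= `|a| -> is_derive t 1 g (partial f k (y + t *: unitv R k)).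
  by move=> t ht; apply: coord_is_derive; exact/Hd/Hx.
have gc : forall t : R, `|t| <= `|a| -> {for t, continuous g}.
  move=> t /gd [dg _]; move/derivable1_diffP: dg.
  exact: differentiable_continuous.
have g0 : g 0 = f y by rewrite /g scale0r addr0.
case: (leP 0 a) => ha.
- have h1 : forall t : R, t \in `[0, a] -> `|t| <= `|a|.
    by move=> t; rewrite in_itv /= => /andP[t0 ta]; rewrite !ger0_norm //; lra.
  have cc : {within `[0, a], continuous g}.
    by apply: continuous_in_subspaceT => t tin; apply: gc; apply: h1; move: tin; rewrite inE.
  have [th thab E] := @MVT_segment R g (fun t => partial f k (y + t *: unitv R k)) 0 a ha
    (fun t tin => gd t (h1 t (subset_itv_oo_cc tin)))
    cc.
  exists th; first exact: h1.
  by move: E; rewrite g0 subr0 mulrC.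
- have h1 : forall t : R, t \in `[a, 0] -> `|t| <= `|a|.
    by move=> t; rewrite in_itv /= => /andP[t0 ta]; rewrite !ler0_norm //; lra.
  have cc : {within `[a, 0], continuous g}.
    by apply: continuous_in_subspaceT => t tin; apply: gc; apply: h1; move: tin; rewrite inE.
  have [th thab E] := @MVT_segment R g (fun t => partial f k (y + t *: unitv R k)) a 0 (ltW ha)
    (fun t tin => gd t (h1 t (subset_itv_oo_cc tin)))
    cc.
  exists th; first exact: h1.
  rewrite -/(g a) -g0; apply: (@oppr_inj _); rewrite opprB E; lra.
Qed.

Lemma ball_entry (x y : B) (r : R) : 0 < r ->
  (forall l, `|x 0 l - y 0 l| < r) -> ball x r y.
Proof.
move=> r0 H; split => // i j; rewrite (ord1 i).
by rewrite /ball /= /ball_ /=; apply: H.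
Qed.

Lemma ball_entryP (x y : B) (r : R) : ball x r y -> forall l, `|x 0 l - y 0 l| < r.
Proof. by case=> _ H l; have := H 0 l. Qed.

Lemma Xpos_near (x : B) : Xpos x -> \forall y \near x, Xpos y.
Proof.
move=> Xx.
have H : forall j, \forall y \near x, 0 < (y : B) 0 j.
  move=> j.
  have /cvgrPdist_lt /(_ (x 0 j) (Xx j)) := @coord_continuous R 1 n.+1 0 j x.
  apply: filter_app; near=> y => /=.
  by rewrite ltr_norml => /andP[H1 H2]; lra.
have H3 : \forall y \near x, forall j, 0 < (y : B) 0 j := filter_forall (nbhs_filter x) H.
apply: (filterS _ H3) => y Hy j; exact: Hy.
Unshelve. all: by end_near.
Qed.

Lemma F1 (f : B -> R) (x : B) :
  Xpos x ->
  (forall y : B, Xpos y -> forall k, derivable f y (unitv R k)) ->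
  (forall k, {for x, continuous (partial f k)}) ->
  forall v : B,
  (fun h : R => h^-1 * (f (x + h *: v) - f x)) @ 0^' --> \sum_k v 0 k * partial f k x.
Proof.
move=> Xx Hd Hc v.
pose S := \sum_k `|v 0 k| + 1.
have S1 : \sum_k `|v 0 k| >= 0 by apply: sumr_ge0 => k _.
have S0 : 0 < S by rewrite /S; lra.
have vS l : `|v 0 l| <= S.
  rewrite /S (bigD1 l) //=.
  have : 0 <= \sum_(i < n.+1 | i != l) `|v 0 i| by apply: sumr_ge0.
  lra.
apply/cvgrPdist_lt => e e0.
pose ep := e / S.
have ep0 : 0 < ep by apply: divr_gt0.
have H2 : forall k, \forall y \near x, `|partial f k x - partial f k y| < ep.
  move=> k; have := Hc k.
  by move/(@cvgrPdist_lt _ _ _ _ (nbhs_filter x)) => /(_ ep ep0).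
have H3 := filter_forall (nbhs_filter x) H2.
have H1 := Xpos_near Xx.
have Hn := (near_andP _ _ (nbhs_filter x)).2 (conj H1 H3).
have /nbhs_ballP [r r0 Hr] := Hn.
near=> h.
have hn0 : h != 0 by near: h; exact: nbhs_dnbhs_neq.
have hr : `|h| < r / S by near: h; apply: dnbhs0_lt; apply: divr_gt0.
have hS : `|h| * S < r by rewrite -ltr_pdivlMr.
pose w (k : nat) : B := \row_l (if (l < k)%N then v 0 l else 0).
pose P (k : nat) : B := x + h *: w k.
have w0 : w 0%N = 0 by apply/rowP => l; rewrite !mxE.
have wn : w n.+1 = v by apply/rowP => l; rewrite !mxE ltn_ord.
have PS (k : 'I_n.+1) : P k.+1 = P k + (h * v 0 k) *: unitv R k.
  rewrite /P -addrA -scalerA -scalerDr; congr (_ + _ *: _).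
  apply/rowP => l; rewrite !mxE ltnS leq_eqVlt.
  case: (eqVneq l k) => [->|lk]; first by rewrite eqxx ltnn mulr1 add0r.
  have lk2 : (l == k :> nat) = false by apply/negbTE.
  by rewrite mulr0 addr0 /= lk2.
have ball_ok (k : 'I_n.+1) (t : R) : `|t| <= `|h * v 0 k| ->
    ball x r (P k + t *: unitv R k).
  move=> ht; apply: ball_entry => // l.
  rewrite !mxE -addrA opprD addrA subrr sub0r normrN.
  case: (eqVneq l k) => [->|lk].
    rewrite ltnn mulr0 add0r mulr1.
    by apply: (le_lt_trans ht); apply: le_lt_trans hS; rewrite normrM ler_wpM2l.
  rewrite mulr0 addr0.
  case: ifP => _; last by rewrite mulr0 normr0.
  by apply: le_lt_trans hS; rewrite normrM ler_wpM2l.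
have -> : f (x + h *: v) - f x = f (P n.+1) - f (P 0%N) by rewrite /P w0 wn scaler0 addr0.
rewrite -(@telescope_sumr _ 0 n.+1 (fun k => f (P k))) // big_mkord mulr_sumr -sumrB.
apply: le_lt_trans (ler_norm_sum _ _ _) _.
have bnd (k : 'I_n.+1) : `|v 0 k * partial f k x - h^-1 * (f (P k.+1) - f (P k))| <= `|v 0 k| * ep.
  have [th thb E] := @mvt_coord f (P k) k (h * v 0 k)
      (fun t ht => (Hr _ (ball_ok k t ht)).1) (fun z Xz => Hd z Xz k).
  rewrite PS E mulrA mulrA mulVf // mul1r -mulrBr normrM ler_wpM2l //.
  exact/ltW/((Hr _ (ball_ok k th thb)).2 k).
apply: le_lt_trans (ler_sum _ (fun k _ => bnd k)) _.
rewrite -mulr_suml /ep mulrA ltr_pdivrMr // mulrC ltr_pM2l //.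
rewrite /S; lra.
Unshelve. all: by end_near.
Qed.

Lemma near0'_P (P : R -> Prop) : (\forall h \near 0^', P h) ->
  exists2 d : R, 0 < d & forall h : R, h != 0 -> `|h| < d -> P h.
Proof.
move=> /nbhs_ballP [d d0 Hd]; exists d => // h h0 hd; apply: Hd => //.
by rewrite /ball /= sub0r normrN.
Qed.

Lemma Xpos_line (x v : B) : Xpos x ->
  exists2 d : R, 0 < d & forall t : R, `|t| < d -> Xpos (x + t *: v).
Proof.
move=> Xx.
have /nbhs_ballP [r r0 Hr] := Xpos_near Xx.
pose S := \sum_k `|v 0 k| + 1.
have S1 : \sum_k `|v 0 k| >= 0 by apply: sumr_ge0 => k _.
have S0 : 0 < S by rewrite /S; lra.
have vS l : `|v 0 l| <= S.
  rewrite /S (bigD1 l) //=.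
  have : 0 <= \sum_(i < n.+1 | i != l) `|v 0 i| by apply: sumr_ge0.
  lra.
exists (r / S); first exact: divr_gt0.
move=> t ht; apply: Hr; apply: ball_entry => // l.
rewrite !mxE opprD addrA subrr sub0r normrN normrM.
have ht' : `|t| * S < r by rewrite -ltr_pdivlMr.
apply: le_lt_trans ht'; rewrite ler_wpM2l //.
Qed.

Lemma Xpos_convex (x y : B) (t : R) : Xpos x -> Xpos y -> 0 <= t <= 1 ->
  Xpos (t *: x + (1 - t) *: y).
Proof.
move=> Xx Xy /andP[t0 t1] j; rewrite !mxE.
have := Xx j; have := Xy j; nra.
Qed.

Lemma line_comb (y d : B) (t a b : R) :
  t *: (y + a *: d) + (1 - t) *: (y + b *: d) = y + (t * a + (1 - t) * b) *: d.
Proof. by apply/rowP => l; rewrite !mxE; ring. Qed.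

Definition grad (f : B -> R) (x v : B) := \sum_k v 0 k * partial f k x.

Lemma grad_unit f x k : grad f x (unitv R k) = partial f k x.
Proof.
rewrite /grad (bigD1 k) //= unitvE eqxx mul1r big1 ?addr0 // => i ik.
by rewrite unitvE (negbTE ik) mul0r.
Qed.

Lemma grad_lin f x (a b : R) v w : grad f x (a *: v + b *: w) = a * grad f x v + b * grad f x w.
Proof.
rewrite /grad !mulr_sumr -big_split /=; apply: eq_bigr => k _; rewrite !mxE; ring.
Qed.

Lemma dirvE (pi : R) (j : 'I_n.+1) : j != ord0 -> dirv pi j = pi *: unitv R ord0 + (-1) *: unitv R j.
Proof.
move=> j0; apply/rowP => l; rewrite !mxE.
case: (eqVneq l ord0) => [->|l0]; first by rewrite eq_sym (negbTE j0); ring.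
by case: ifP => _; ring.
Qed.

Lemma grad_dirv f x pi j : j != ord0 -> grad f x (dirv pi j) = pi * partial f ord0 x - partial f j x.
Proof. by move=> j0; rewrite dirvE // grad_lin !grad_unit; ring. Qed.
End F1.
Section Gen.
Variable (R : realType).

Lemma cvg_bigsum {T : Type} (F : set_system T) {FF : Filter F} (I : Type) (r : seq I)
  (f : I -> T -> R) (l : I -> R) :
  (forall i, f i @ F --> l i) -> (fun t => \sum_(i <- r) f i t) @ F --> \sum_(i <- r) l i.
Proof.
move=> H; elim: r => [|i r IH].
  have -> : (fun t => \sum_(i <- [::]) f i t) = fun _ => 0 by apply/funext => t; rewrite big_nil.
  by rewrite big_nil; exact: cvg_cst.
have -> : (fun t => \sum_(j <- i :: r) f j t) = (fun t => f i t + \sum_(j <- r) f j t).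
  by apply/funext => t; rewrite big_cons.
by rewrite big_cons; apply: cvgD.
Qed.

Lemma lim0 (g : R -> R) (l r : R) : 0 < r -> g @ 0^' --> l ->
  (forall h, h != 0 -> `|h| < r -> g h = 0) -> l = 0.
Proof.
move=> r0 gl H; apply/eqP; apply: contraT => l0.
have nl : 0 < `|l| by rewrite normr_gt0.
move/cvgrPdist_lt: gl => /(_ _ nl) /near0'_P [d d0 Hd].
pose h := Num.min d r / 2.
have h0 : 0 < h by rewrite /h divr_gt0 // lt_min d0 r0.
have m1 : Num.min d r <= d by rewrite ge_min lexx.
have m2 : Num.min d r <= r by rewrite ge_min lexx orbT.
have hd : h < d by rewrite /h; lra.
have hr : h < r by rewrite /h; lra.
have := Hd h (lt0r_neq0 h0); rewrite gtr0_norm // => /(_ hd).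
by rewrite H ?subr0 ?ltxx // ?gtr0_norm // lt0r_neq0.
Qed.
End Gen.

Section U1.
Variables (R : realType) (n : nat).
Local Notation B := (bundle R n).
Variable (u : B -> R).
Hypothesis ua : utility_assumptions u.

Lemma u_conc : concave_on u. Proof. by case: ua. Qed.
Lemma u_C2 : C2_on u. Proof. by case: ua. Qed.
Lemma u_gpos x : Xpos x -> forall j, 0 < partial u j x. Proof. by case: ua => _ _ H _ _; apply: H. Qed.
Lemma u_cont x : Xpos x -> {for x, continuous u}. Proof. by move=> /u_C2 []. Qed.
Lemma u_der x : Xpos x -> forall k, derivable u x (unitv R k). Proof. by move=> /u_C2 []. Qed.
Lemma u_pcont x : Xpos x -> forall k, {for x, continuous (partial u k)}. Proof. by move=> /u_C2 []. Qed.

Lemma F1u x v : Xpos x ->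
  (fun h : R => h^-1 * (u (x + h *: v) - u x)) @ 0^' --> grad u x v.
Proof.
move=> Xx; apply: F1 => //; [exact: u_der | exact: u_pcont].
Qed.

Lemma grad_ineq x y : Xpos x -> Xpos y -> u y <= u x + grad u x (y - x).
Proof.
move=> Xx Xy; set D := grad u x (y - x).
case: (leP (u y) (u x + D)) => // H; exfalso.
have ep0 : 0 < u y - u x - D by lra.
have := @F1u x (y - x) Xx; move/cvgrPdist_lt => /(_ _ ep0) /near0'_P [d d0 Hd].
pose h := Num.min (d / 2) 1.
have h0 : 0 < h by rewrite /h lt_min ltr01 andbT divr_gt0.
have h1 : h <= 1 by rewrite /h ge_min lexx orbT.
have hd : h < d.
  have : h <= d / 2 by rewrite /h ge_min lexx.
  lra.
have := Hd h (lt0r_neq0 h0); rewrite gtr0_norm // => /(_ hd).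
have E : x + h *: (y - x) = h *: y + (1 - h) *: x by apply/rowP => l; rewrite !mxE; ring.
have Hc := @u_conc y x h Xy Xx; rewrite h1 ltW // in Hc.
have {}Hc := Hc isT.
rewrite E; set A := u (h *: y + (1 - h) *: x) in Hc *.
set q := h^-1 * (A - u x).
have Aq : A - u x = h * q by rewrite /q mulrA mulfV ?mul1r // gt_eqF.
rewrite ltr_norml => /andP[H1 H2].
move: H1 H2; rewrite -/D => H1 H2.
have : u y - u x <= q by rewrite -(ler_pM2l h0); nra.
lra.
Qed.

Lemma argmax_before y d xs a b : Xpos y -> is_argmax_dir u y d xs ->
  0 <= a -> a <= b -> b <= xs -> u (y + a *: d) <= u (y + b *: d).
Proof.
move=> Xy [xs0 Xs Hmax] a0 ab bxs.
case: (eqVneq a b) => [->//|anb].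
have altb : a < b by rewrite lt_neqAle anb.
have xsa : 0 < xs - a by lra.
have Xa : Xpos (y + a *: d).
  have E : y + a *: d = (a / xs) *: (y + xs *: d) + (1 - a / xs) *: y.
    apply/rowP => l; rewrite !mxE; field; lra.
  rewrite E; apply: Xpos_convex => //.
  have xs1 : 0 < xs by lra.
  rewrite divr_ge0 ?ler_pdivrMr ?mul1r; lra.
pose lam := (xs - b) / (xs - a).
have lam0 : 0 <= lam by rewrite divr_ge0 //; lra.
have lam1 : lam <= 1 by rewrite ler_pdivrMr // mul1r; lra.
have Hc := @u_conc (y + a *: d) (y + xs *: d) lam Xa Xs; rewrite lam0 lam1 in Hc.
have {}Hc := Hc isT.
rewrite line_comb in Hc.
have -> : b = lam * a + (1 - lam) * xs by rewrite /lam; field; lra.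
have := Hmax a a0 Xa.
nra.
Qed.

Lemma argmax_after y d xs a b : is_argmax_dir u y d xs ->
  xs <= a -> a <= b -> Xpos (y + b *: d) -> u (y + b *: d) <= u (y + a *: d).
Proof.
move=> [xs0 Xs Hmax] xsa ab Xb.
case: (eqVneq a b) => [->//|anb].
have altb : a < b by rewrite lt_neqAle anb.
have bxs : 0 < b - xs by lra.
pose lam := (b - a) / (b - xs).
have lam0 : 0 <= lam by rewrite divr_ge0 //; lra.
have lam1 : lam <= 1 by rewrite ler_pdivrMr // mul1r; lra.
have Hc := @u_conc (y + xs *: d) (y + b *: d) lam Xs Xb; rewrite lam0 lam1 in Hc.
have {}Hc := Hc isT.
rewrite line_comb in Hc.
have -> : a = lam * xs + (1 - lam) * b by rewrite /lam; field; lra.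
have := Hmax b (ltW (le_lt_trans xs0 (le_lt_trans xsa altb))) Xb.
nra.
Qed.

Lemma keyA x d : Xpos x -> 0 < grad u x d ->
  exists2 c : R, 0 < c &
    (forall t, 0 < t <= 2 * c -> Xpos (x + t *: d) /\ u x < u (x + t *: d)) /\
    u (x + c *: d) < u (x + (2 * c) *: d).
Proof.
move=> Xx D0; set D := grad u x d in D0.
have ep0 : 0 < D / 4 by rewrite divr_gt0.
have := @F1u x d Xx; move/cvgrPdist_lt => /(_ _ ep0) /near0'_P [d1 d10 Hd1].
have [d2 d20 Hd2] := @Xpos_line _ _ x d Xx.
pose e := Num.min d1 d2.
have e0 : 0 < e by rewrite /e lt_min d10 d20.
have e1 : e <= d1 by rewrite /e ge_min lexx.
have e2 : e <= d2 by rewrite /e ge_min lexx orbT.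
have Hq t : 0 < t < e -> Xpos (x + t *: d) /\
    3 * D / 4 * t < u (x + t *: d) - u x < 5 * D / 4 * t.
  move=> /andP[t0 te]; split; first by apply: Hd2; rewrite gtr0_norm //; lra.
  have := Hd1 t (lt0r_neq0 t0); rewrite gtr0_norm // => /(_ (lt_le_trans te e1)).
  set q := t^-1 * _.
  have Aq : u (x + t *: d) - u x = t * q by rewrite /q mulrA mulfV ?mul1r // gt_eqF.
  rewrite ltr_norml Aq -/D => /andP[H1 H2].
  apply/andP; split; nra.
exists (e / 3); first by rewrite divr_gt0.
split.
  move=> t /andP[t0 te]; have /Hq [Xt] : 0 < t < e by rewrite t0 /=; lra.
  move=> /andP[H1 H2]; split => //; nra.
have /Hq [_ /andP[H1 H2]] : 0 < e / 3 < e by apply/andP; split; lra.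
have /Hq [_ /andP[H3 H4]] : 0 < 2 * (e / 3) < e by apply/andP; split; lra.
nra.
Qed.

Lemma sqc x y : Xpos x -> Xpos y -> x != y ->
  (forall t, 0 <= t <= 1 -> u (x + t *: (y - x)) = u x) -> False.
Proof.
move=> Xx Xy xy Hconst; set v := y - x.
have v0 : v != 0 by rewrite subr_eq0 eq_sym.
have Xt t : 0 <= t <= 1 -> Xpos (x + t *: v).
  move=> t01; have -> : x + t *: v = t *: y + (1 - t) *: x.
    by apply/rowP => l; rewrite !mxE; ring.
  exact: Xpos_convex.
have Gz s : 1/4 < s < 3/4 -> grad u (x + s *: v) v = 0.
  move=> /andP[s1 s2].
  have Xs : Xpos (x + s *: v) by apply: Xt; apply/andP; split; lra.
  apply: (@lim0 _ _ _ (1/4) _ (@F1u _ v Xs)); first by lra.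
  move=> h h0 hr; rewrite -addrA -scalerDl !Hconst ?subrr ?mulr0 //.
    by apply/andP; split; lra.
  move: hr; rewrite ltr_norml => /andP[h1 h2].
  by apply/andP; split; lra.
pose c := x + (1/2) *: v.
have Xc : Xpos c by apply: Xt; apply/andP; split; lra.
have H0 : grad u c v = 0 by apply: Gz; apply/andP; split; lra.
have C2c := u_C2 Xc.
have Hq : (fun h => h^-1 * (grad u (c + h *: v) v - grad u c v)) @ 0^' -->
    \sum_j v 0 j * grad (partial u j) c v.
  have -> : (fun h => h^-1 * (grad u (c + h *: v) v - grad u c v)) =
      (fun h => \sum_j v 0 j * (h^-1 * (partial u j (c + h *: v) - partial u j c))).
    apply/funext => h; rewrite /grad -sumrB mulr_sumr; apply: eq_bigr => j _; ring.
  apply: cvg_bigsum => j; apply: cvgMl_tmp; apply: F1 => //.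
    by move=> y0 /u_C2 [] _ _ _ H _; apply: H.
  by case: C2c => _ _ _ _ H; apply: H.
have Hz : \sum_j v 0 j * grad (partial u j) c v = 0.
  apply: (@lim0 _ _ _ (1/4) _ Hq); first by lra.
  move=> h h0 hr; rewrite H0 subr0.
  rewrite (_ : c + h *: v = x + (1/2 + h) *: v); last by rewrite /c -addrA -scalerDl.
  rewrite Gz ?mulr0 //.
  move: hr; rewrite ltr_norml => /andP[h1 h2].
  by apply/andP; split; lra.
case: ua => _ _ _ Hess _.
have := Hess c Xc v v0 H0.
have E : \sum_j \sum_k v 0 j * v 0 k * partial (partial u j) k c =
    \sum_j v 0 j * grad (partial u j) c v.
  by apply: eq_bigr => j _; rewrite /grad mulr_sumr; apply: eq_bigr => k _; ring.
by rewrite E Hz ltxx.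
Qed.

Lemma budget_line (p : 'I_n.+1 -> R) x y (t : R) :
  budget p (x + t *: (y - x)) = budget p x + t * (budget p y - budget p x).
Proof.
rewrite /budget.
have -> : \sum_(j < n.+1 | j != ord0) p j * (x + t *: (y - x)) 0 j =
   \sum_(j < n.+1 | j != ord0) p j * x 0 j + t * (\sum_(j < n.+1 | j != ord0) p j * y 0 j
      - \sum_(j < n.+1 | j != ord0) p j * x 0 j).
  rewrite -sumrB mulr_sumr -big_split /=; apply: eq_bigr => j _; rewrite !mxE; ring.
rewrite !mxE; ring.
Qed.

Lemma grad_budget x (p : 'I_n.+1 -> R) : Xpos x ->
  (forall j, j != ord0 -> pthr u x j = p j) ->
  forall w, grad u x w = partial u ord0 x * (w 0 ord0 + \sum_(j < n.+1 | j != ord0) p j * w 0 j).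
Proof.
move=> Xx Hp w.
have d0 : partial u ord0 x != 0 by apply: lt0r_neq0; apply: u_gpos.
rewrite /grad (bigD1 ord0) //= mulrDr mulr_sumr; congr (_ + _); first by rewrite mulrC.
apply: eq_bigr => j j0; rewrite -(Hp j j0) /pthr; by field.
Qed.

Lemma foc_budget x (p : 'I_n.+1 -> R) : Xpos x ->
  (forall j, j != ord0 -> pthr u x j = p j) ->
  forall y, Xpos y -> u y <= u x + partial u ord0 x * (budget p y - budget p x).
Proof.
move=> Xx Hp y Xy; apply: le_trans (grad_ineq Xx Xy) _.
rewrite (grad_budget Xx Hp) /budget; apply: lerD => //.
rewrite ler_pM2l ?u_gpos //.
rewrite (_ : \sum_(j < n.+1 | j != ord0) p j * (y - x) 0 j =
  \sum_(j < n.+1 | j != ord0) p j * y 0 j - \sum_(j < n.+1 | j != ord0) p j * x 0 j).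
  by rewrite !mxE; lra.
by rewrite -sumrB; apply: eq_bigr => j _; rewrite !mxE; ring.
Qed.

Lemma max_on_budget x (p : 'I_n.+1 -> R) : Xpos x ->
  (forall j, j != ord0 -> pthr u x j = p j) ->
  forall y, Xpos y -> budget p y = budget p x -> u y <= u x.
Proof.
move=> Xx Hp y Xy E; have := foc_budget Xx Hp Xy; rewrite E subrr mulr0 addr0.
done.
Qed.

Lemma unique_on_budget x (p : 'I_n.+1 -> R) : Xpos x ->
  (forall j, j != ord0 -> pthr u x j = p j) ->
  forall y, Xpos y -> budget p y = budget p x -> u x <= u y -> y = x.
Proof.
move=> Xx Hp y Xy E uxy; apply/eqP; apply: contraT => yx; exfalso.
apply: (@sqc x y Xx Xy); first by rewrite eq_sym.
move=> t /andP[t0 t1].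
have Xz : Xpos (x + t *: (y - x)).
  have -> : x + t *: (y - x) = t *: y + (1 - t) *: x by apply/rowP => l; rewrite !mxE; ring.
  by apply: Xpos_convex => //; rewrite t0 t1.
apply/eqP; rewrite eq_le; apply/andP; split.
  by apply: (max_on_budget Xx Hp Xz); rewrite budget_line E subrr mulr0 addr0.
have -> : x + t *: (y - x) = t *: y + (1 - t) *: x by apply/rowP => l; rewrite !mxE; ring.
have := @u_conc y x t Xy Xx; rewrite t0 t1 => /(_ isT).
nra.
Qed.
End U1.



Section Ultra.
Lemma FE_proper (E : set nat) : (forall N, exists t, (N <= t)%N /\ E t) ->
  ProperFilter [set A : set nat | exists N, forall t, (N <= t)%N -> E t -> A t].
Proof.
move=> HE; apply: Build_ProperFilter_ex.
  by move=> A [N HA]; have [t [Nt Et]] := HE N; exists t; apply: HA.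
split.
- by exists 0%N.
- move=> A B [N1 H1] [N2 H2]; exists (maxn N1 N2) => t Nt Et.
  by split; [apply: H1 | apply: H2] => //; apply: leq_trans Nt; rewrite ?leq_maxl ?leq_maxr.
- by move=> A B AB [N H]; exists N => t Nt Et; apply: AB; apply: H.
Qed.

Lemma ultra_exists (E : set nat) : (forall N, exists t, (N <= t)%N /\ E t) ->
  exists U : set_system nat, [/\ UltraFilter U, (forall A, (\forall t \near \oo, A t) -> U A) & U E].
Proof.
move=> HE; have [U [UU sub]] := ultraFilterLemma (FE_proper HE).
exists U; split => //.
  move=> A [N _ HA]; apply: sub; exists N => t Nt _; exact: HA.
by apply: sub; exists 0%N.
Qed.

Lemma ultra_fin (U : set_system nat) (T : finType) (g : nat -> T) :
  UltraFilter U -> exists c, U [set t | g t = c].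
Proof.
move=> UU; apply: contrapT => Hn.
have H : forall c, U (~` [set t | g t = c]).
  move=> c; case: (in_ultra_setVsetC [set t | g t = c] UU) => // H; exfalso.
  by apply: Hn; exists c.
have := filter_forall (@ultra_proper _ _ UU) H.
move=> /(@filter_ex _ _ (@ultra_proper _ _ UU)) [t Ht].
exact: (Ht (g t)).
Qed.

Lemma ultra_cvg (U : set_system nat) (X : topologicalType) (K : set X) (f : nat -> X) :
  UltraFilter U -> compact K -> U (f @^-1` K) -> exists2 p, K p & f @ U --> p.
Proof.
move=> UU cK UK.
have PF : ProperFilter (f @ U) := fmap_proper_filter f (@ultra_proper _ _ UU).
have [p [Kp clp]] := cK _ PF UK.
exists p => // V Vp.
case: (in_ultra_setVsetC (f @^-1` V) UU) => // H; exfalso.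
have [q [q1 q2]] := clp (~` V) V H Vp.
exact: q1.
Qed.
End Ultra.

Section Agents.
Variables (R : realType) (n m : nat).
Local Notation B := (bundle R n).
Local Notation St := (state R n m).
Variable (u : 'I_m -> B -> R).
Hypothesis ua : forall i, utility_assumptions (u i).

Lemma Xpos_seg (y d : B) (a b : R) : Xpos y -> Xpos (y + b *: d) -> 0 <= a -> a <= b ->
  Xpos (y + a *: d).
Proof.
move=> Xy Xb a0 ab.
case: (eqVneq b 0) => [b0|bn0].
  have -> : a = 0 by lra.
  by rewrite scale0r addr0.
have b0 : 0 < b by rewrite lt_neqAle eq_sym bn0 /=; lra.
have E : y + a *: d = (a / b) *: (y + b *: d) + (1 - a / b) *: y.
  apply/rowP => l; rewrite !mxE; field; lra.
rewrite E; apply: Xpos_convex => //.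
by rewrite divr_ge0 ?ler_pdivrMr ?mul1r //; lra.
Qed.

Lemma sum_if2 (i1 i2 : 'I_m) (A C : B) : i1 != i2 ->
  \sum_i (if i == i1 then A else if i == i2 then C else 0) = A + C.
Proof.
move=> i12.
rewrite (eq_bigr (fun i => (if i == i1 then A else 0) + (if i == i2 then C else 0))); last first.
  move=> i _; case: (eqVneq i i1) => [->|ii1]; first by rewrite (negbTE i12) addr0.
  by rewrite add0r.
by rewrite big_split /= -!big_mkcond /= !big_pred1_eq.
Qed.

Lemma step_props delta (x y : St) : (forall i, Xpos (x i)) -> trade_step u delta x y ->
  [/\ forall i, Xpos (y i), \sum_i y i = \sum_i x i & forall i, u i (x i) <= u i (y i)].
Proof.
move=> Xx [i1 [i2 [j [pi [xp [xm [[i12 j0 _ _ _] Hp Hm ->]]]]]]].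
set xi := Num.min xp xm.
have [xp0 Xp _] := Hp; have [xm0 Xm _] := Hm.
have xi0 : 0 <= xi by rewrite /xi le_min xp0 xm0.
have xip : xi <= xp by rewrite /xi ge_min lexx.
have xim : xi <= xm by rewrite /xi ge_min lexx orbT.
have X1 : Xpos (x i1 + xi *: dirv pi j) := Xpos_seg (Xx i1) Xp xi0 xip.
have X2 : Xpos (x i2 - xi *: dirv pi j).
  by rewrite -scalerN; exact: (Xpos_seg (Xx i2) Xm xi0 xim).
have U1 : u i1 (x i1) <= u i1 (x i1 + xi *: dirv pi j).
  by have := argmax_before (ua i1) (Xx i1) Hp (lexx 0) xi0 xip; rewrite scale0r addr0.
have U2 : u i2 (x i2) <= u i2 (x i2 - xi *: dirv pi j).
  have := argmax_before (ua i2) (Xx i2) Hm (lexx 0) xi0 xim.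
  by rewrite scale0r addr0 scalerN.
split.
- move=> i /=; case: ifP => [_|_]; first by []; case: ifP => [_|_] //.
- rewrite (eq_bigr (fun i => x i + (if i == i1 then xi *: dirv pi j
      else if i == i2 then - (xi *: dirv pi j) else 0))); last first.
    move=> i _; case: ifP => [/eqP -> //|_]; case: ifP => [/eqP -> |_]; first by [].
    by rewrite addr0.
  by rewrite big_split /= sum_if2 // subrr addr0.
- move=> i /=; case: ifP => [/eqP -> //|_]; case: ifP => [/eqP -> //|_] //.
Qed.

Definition stepish (s : nat -> St) := forall k,
  (exists d, trade_step u d (s k) (s k.+1)) \/ s k.+1 = s k.

Lemma seq_props (z : St) (s : nat -> St) : (forall i, Xpos (z i)) -> s 0%N = z ->
  stepish s -> forall k,
  [/\ forall i, Xpos (s k i), \sum_i s k i = \sum_i z i,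
      forall i, u i (s k i) <= u i (s k.+1 i) & forall i, u i (z i) <= u i (s k i)].
Proof.
move=> Xz s0 Hs.
have P k : [/\ forall i, Xpos (s k i), \sum_i s k i = \sum_i z i & forall i, u i (z i) <= u i (s k i)].
  elim: k => [|k [IH1 IH2 IH3]]; first by rewrite s0.
  case: (Hs k) => [[d Hd]|->] //.
  have [H1 H2 H3] := step_props IH1 Hd.
  split => //; first by rewrite H2.
  by move=> i; apply: le_trans (IH3 i) (H3 i).
move=> k; have [P1 P2 P3] := P k; split => //.
case: (Hs k) => [[d Hd]|->] //.
by have [] := step_props P1 Hd.
Qed.

Lemma entry_le_sum (x : St) i l : (forall i, Xpos (x i)) -> x i 0 l <= (\sum_i x i) 0 l.
Proof.
move=> Xx; rewrite summxE (bigD1 i) //= lerDl sumr_ge0 // => k _.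
exact: ltW (Xx k l).
Qed.

Definition Kset (z : St) i := [set y : B | Xpos y /\ u i (z i) <= u i y] `&`
  [set y : B | forall l, `[0, (\sum_k z k) 0 l]%classic (y 0 l)].

Lemma Kset_compact z i : Xpos (z i) -> compact (Kset z i).
Proof.
move=> Xz.
have cB := @rV_compact R n.+1 (fun l => `[0, (\sum_k z k) 0 l]%classic)
  (fun l => @segment_compact R 0 ((\sum_k z k) 0 l)).
apply: (subclosed_compact _ cB).
  apply: closedI; first by case: (ua i) => _ _ _ _; apply.
  have -> : [set y : B | forall l, `[0, (\sum_k z k) 0 l]%classic (y 0 l)] =
     \bigcap_(l in setT) ((fun y : B => y 0 l) @^-1` `[0, (\sum_k z k) 0 l]%classic).
    by apply/seteqP; split => y /= H l; [move=> _; exact: H | exact: (H l I)].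
  apply: closed_bigI => l _; apply: preimage_closed; last exact: itv_closed.
  by move=> y _; apply: coord_continuous.
by move=> y [].
Qed.

Lemma in_Kset z (x : St) i : (forall i, Xpos (x i)) -> \sum_i x i = \sum_i z i ->
  u i (z i) <= u i (x i) -> Kset z i (x i).
Proof.
move=> Xx E uz; split => // l; rewrite /= in_itv /= -E (ltW (Xx i l)) /=.
exact: entry_le_sum.
Qed.

Lemma u_bound z i (y : B) : Xpos (z i) -> Xpos y -> (forall l, y 0 l <= (\sum_k z k) 0 l) ->
  u i y <= u i (z i) + \sum_l (\sum_k z k) 0 l * partial (u i) l (z i).
Proof.
move=> Xz Xy Hy; apply: le_trans (grad_ineq (ua i) Xz Xy) _; rewrite lerD2l.
apply: ler_sum => l _; rewrite ler_wpM2r ?(ltW (u_gpos (ua i) Xz l)) //.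
rewrite !mxE; have := Xz l; have := Hy l; lra.
Qed.
End Agents.

Section FH.
Variables (R : realType) (n : nat).
Local Notation B := (bundle R n).
Variable (F : set_system nat).
Hypothesis FF : ProperFilter F.

Lemma ev_Xpos (f : nat -> B) x : f @ F --> x -> Xpos x -> F [set k | Xpos (f k)].
Proof. by move=> fx Xx; apply: fx; exact: Xpos_near. Qed.

Lemma ev_lt (f g : nat -> R) a b : f @ F --> a -> g @ F --> b -> a < b ->
  F [set k | f k < g k].
Proof.
move=> fa gb ab.
have e0 : 0 < (b - a) / 2 by rewrite divr_gt0 // subr_gt0.
move/cvgrPdist_lt: fa => /(_ _ e0) H1.
move/cvgrPdist_lt: gb => /(_ _ e0) H2.
apply: filterS2 H1 H2 => k /=; rewrite !ltr_norml => /andP[h1 h2] /andP[h3 h4].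
lra.
Qed.

Lemma lim_le (f g : nat -> R) a b : f @ F --> a -> g @ F --> b ->
  F [set k | f k <= g k] -> a <= b.
Proof.
move=> fa gb Hfg; case: (leP a b) => // ba; exfalso.
have := @filterI _ F FF _ _ Hfg (ev_lt gb fa ba).
by move=> /filter_ex [k [/= h1 h2]]; lra.
Qed.

Lemma pthr_cvg (uu : B -> R) (uua : utility_assumptions uu) (f : nat -> B) x j :
  Xpos x -> f @ F --> x -> (fun k => pthr uu (f k) j) @ F --> pthr uu x j.
Proof.
move=> Xx fx.
have H1 := continuous_cvg FF (@u_pcont _ _ _ uua x Xx j) fx.
have H0 := continuous_cvg FF (@u_pcont _ _ _ uua x Xx ord0) fx.
have nz : partial uu ord0 x != 0 by apply: lt0r_neq0; apply: u_gpos.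
exact: (cvgM H1 (cvgV nz H0)).
Qed.

Lemma dirv_cvg (p : nat -> R) (pb : R) (j : 'I_n.+1) : j != ord0 -> p @ F --> pb ->
  (fun k => dirv (p k) j) @ F --> dirv pb j.
Proof.
move=> j0 pp; rewrite dirvE //.
have -> : (fun k => dirv (p k) j) = (fun k => p k *: unitv R ord0 + (-1) *: unitv R j).
  by apply/funext => k; rewrite dirvE.
apply: cvgD; first exact: cvgZr_tmp.
exact: cvg_cst.
Qed.

Lemma line_cvg (y d : nat -> B) (yb db : B) (t : R) : y @ F --> yb -> d @ F --> db ->
  (fun k => y k + t *: d k) @ F --> yb + t *: db.
Proof. by move=> fy fd; apply: cvgD => //; apply: cvgZl_tmp. Qed.

Lemma u_cvg (uu : B -> R) (uua : utility_assumptions uu) (f : nat -> B) (x : B) :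
  Xpos x -> f @ F --> x -> (fun k => uu (f k)) @ F --> uu x.
Proof. by move=> Xx fx; apply: (continuous_cvg FF (u_cont uua Xx) fx). Qed.
End FH.



Section Main.
Variables (R : realType) (n m : nat).
Local Notation B := (bundle R n).
Local Notation St := (state R n m).
Variable (u : 'I_m -> B -> R).
Hypothesis ua : forall i, utility_assumptions (u i).

Lemma grad_N (f : B -> R) x v : grad f x (- v) = - grad f x v.
Proof. by rewrite /grad -sumrN; apply: eq_bigr => k _; rewrite mxE; ring. Qed.

Lemma Vstuff (z : St) (s : nat -> St) : (forall i, Xpos (z i)) -> s 0%N = z -> stepish u s ->
  (fun k => \sum_i u i (s k.+1 i) - \sum_i u i (s k i)) @ \oo --> 0.
Proof.
move=> Xz s0 Hs; have SP := seq_props ua Xz s0 Hs.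
pose V k := \sum_i u i (s k i).
have Vnd : nondecreasing_seq V.
  by apply/nondecreasing_seqP => k; apply: ler_sum => i _; have [] := SP k.
have Vub : has_ubound (range V).
  exists (\sum_i (u i (z i) + \sum_l (\sum_k z k) 0 l * partial (u i) l (z i))).
  move=> _ [k _ <-]; apply: ler_sum => i _.
  have [X1 X2 _ _] := SP k.
  by apply: u_bound => // l; rewrite -X2; exact: entry_le_sum.
have Vc := nondecreasing_cvgn Vnd Vub.
have Vc1 : (fun k => V k.+1) @ \oo --> sup (range V) by rewrite cvg_shiftS.
have := cvgB Vc1 Vc; rewrite subrr. move=> H. exact: H.
Qed.

Lemma gain_le (x y : St) i : (forall i, u i (x i) <= u i (y i)) ->
  u i (y i) - u i (x i) <= \sum_i u i (y i) - \sum_i u i (x i).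
Proof.
move=> H; rewrite -sumrB (bigD1 i) //= lerDl sumr_ge0 // => k _.
by rewrite subr_ge0.
Qed.

Lemma no_infinite (delta : premiums R n m) (z : St) :
  (forall i j, j != ord0 -> 0 < delta i j) -> (forall i, Xpos (z i)) ->
  ~ exists s : nat -> St, s 0%N = z /\ forall k, trade_step u delta (s k) (s k.+1).
Proof.
move=> dpos Xz [s [s0 Hs]].
have Hst : stepish u s by move=> k; left; exists delta.
have SP := seq_props ua Xz s0 Hst.
have Vc := Vstuff Xz s0 Hst.
have SX k : forall i, Xpos (s k i) by have [] := SP k.
have SS k : \sum_i s k i = \sum_i z i by have [] := SP k.
have SU k i : u i (z i) <= u i (s k i) by have [] := SP k.
have SM k i : u i (s k i) <= u i (s k.+1 i) by have [] := SP k.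
pose P k (p : 'I_m * 'I_m * 'I_n.+1 * R * R * R) :=
  [/\ trade_avail u delta (s k) p.1.1.1.1.1 p.1.1.1.1.2 p.1.1.1.2 p.1.1.2,
      is_xi_plus (u p.1.1.1.1.1) (s k p.1.1.1.1.1) p.1.1.1.2 p.1.1.2 p.1.2,
      is_xi_minus (u p.1.1.1.1.2) (s k p.1.1.1.1.2) p.1.1.1.2 p.1.1.2 p.2 &
      s k.+1 p.1.1.1.1.1 = s k p.1.1.1.1.1 + Num.min p.1.2 p.2 *: dirv p.1.1.2 p.1.1.1.2].
have Hch : forall k, exists p, P k p.
  move=> k; have [i1 [i2 [j [pi [xp [xm [Ha Hp Hm E]]]]]]] := Hs k.
  by exists (i1, i2, j, pi, xp, xm); split => //; rewrite E eqxx.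
have [f Hf] := choice Hch.
pose I1 k := (f k).1.1.1.1.1. pose I2 k := (f k).1.1.1.1.2. pose J k := (f k).1.1.1.2.
pose PI k := (f k).1.1.2. pose XP k := (f k).1.2. pose XM k := (f k).2.
have HF k : [/\ trade_avail u delta (s k) (I1 k) (I2 k) (J k) (PI k),
      is_xi_plus (u (I1 k)) (s k (I1 k)) (J k) (PI k) (XP k),
      is_xi_minus (u (I2 k)) (s k (I2 k)) (J k) (PI k) (XM k) &
      s k.+1 (I1 k) = s k (I1 k) + Num.min (XP k) (XM k) *: dirv (PI k) (J k)] := Hf k.
have [U [UU Uoo _]] := @ultra_exists setT (fun N => ex_intro _ N (conj (leqnn N) I)).
have PU : ProperFilter U := @ultra_proper _ _ UU.
have UA : forall A : set nat, (forall t, A t) -> U A.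
  by move=> A HA; apply: Uoo; exists 0%N => // t _; apply: HA.
have Lim i : exists p, Kset u z i p /\ (fun k => s k i) @ U --> p.
  have [p Kp cv] := ultra_cvg UU (Kset_compact ua (z := z) (i := i) (Xz i))
    (UA _ (fun k => in_Kset (SX k) (SS k) (SU k i))).
  by exists p.
have [xb Hxb] := choice Lim.
have Xb i : Xpos (xb i) by have [[[]]] := Hxb i.
have Cb i : (fun k => s k i) @ U --> xb i by have [] := Hxb i.
have [[[c1 c2] cj] Uc] := ultra_fin (fun k => (I1 k, I2 k, J k)) UU.
have [c12 cj0] : c1 != c2 /\ cj != ord0.
  have [k [E1 E2 E3]] := filter_ex Uc.
  by have [[h1 h2 _ _ _] _ _ _] := HF k; rewrite -E1 -E2 -E3.
pose a := pthr (u c1) (xb c1) cj.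
pose b := pthr (u c2) (xb c2) cj.
have P1c : (fun k => pthr (u c1) (s k c1) cj) @ U --> a := pthr_cvg PU (ua c1) (Xb c1) (Cb c1).
have P2c : (fun k => pthr (u c2) (s k c2) cj) @ U --> b := pthr_cvg PU (ua c2) (Xb c2) (Cb c2).
have d1 := dpos c1 cj cj0.
have d2 := dpos c2 cj cj0.
have UPI : U [set k | pthr (u c1) (s k c1) cj + delta c1 cj <= PI k /\
    PI k <= pthr (u c2) (s k c2) cj - delta c2 cj].
  apply: (filterS _ Uc) => k [E1 E2 E3].
  have [[_ _ _ _ /andP[h1 h2]] _ _ _] := HF k.
  by rewrite /psell /pbuy E1 E2 E3 in h1 h2.
have Ua1 : U [set k | a - 1 < pthr (u c1) (s k c1) cj].
  by apply: (ev_lt PU (cvg_cst (a - 1)) P1c); lra.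
have Ub1 : U [set k | pthr (u c2) (s k c2) cj < b + 1].
  by apply: (ev_lt PU P2c (cvg_cst (b + 1))); lra.
have UK : U (PI @^-1` `[a - 1, b + 1]%classic).
  apply: (filterS _ (filterI UPI (filterI Ua1 Ub1))) => k [[h1 h2] [h3 h4]] /=.
  by rewrite in_itv /=; move: h3 h4 => /= h3 h4; apply/andP; split; lra.
have [pib _ PIc] := ultra_cvg UU (@segment_compact R (a - 1) (b + 1)) UK.
have pa : a + delta c1 cj <= pib.
  apply: (lim_le PU (cvgD P1c (cvg_cst (delta c1 cj))) PIc).
  by apply: (filterS _ UPI) => k [].
have pb : pib <= b - delta c2 cj.
  apply: (lim_le PU PIc (cvgB P2c (cvg_cst (delta c2 cj)))).
  by apply: (filterS _ UPI) => k [].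
pose dk k := dirv (PI k) cj.
pose db := dirv pib cj.
have dc : dk @ U --> db := dirv_cvg PU cj0 PIc.
have Ds : 0 < grad (u c1) (xb c1) db.
  rewrite grad_dirv //.
  have p0 := u_gpos (ua c1) (Xb c1) ord0.
  have E : partial (u c1) cj (xb c1) = a * partial (u c1) ord0 (xb c1).
    by rewrite /a /pthr divfK // lt0r_neq0.
  rewrite E; nra.
have Db : 0 < grad (u c2) (xb c2) (- db).
  rewrite grad_N grad_dirv //.
  have p0 := u_gpos (ua c2) (Xb c2) ord0.
  have E : partial (u c2) cj (xb c2) = b * partial (u c2) ord0 (xb c2).
    by rewrite /b /pthr divfK // lt0r_neq0.
  rewrite E; nra.
have [cs cs0 [Hs1 Hs2]] := keyA (ua c1) (Xb c1) Ds.
have [cb cb0 [Hb1 Hb2]] := keyA (ua c2) (Xb c2) Db.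
pose c0 := Num.min cs cb.
have c00 : 0 < c0 by rewrite /c0 lt_min cs0 cb0.
have c0s : c0 <= cs by rewrite /c0 ge_min lexx.
have c0b : c0 <= cb by rewrite /c0 ge_min lexx orbT.
have [Xc0 uc0] : Xpos (xb c1 + c0 *: db) /\ u c1 (xb c1) < u c1 (xb c1 + c0 *: db).
  by apply: Hs1; apply/andP; split; lra.
pose eta := (u c1 (xb c1 + c0 *: db) - u c1 (xb c1)) / 2.
have eta0 : 0 < eta by rewrite /eta divr_gt0 // subr_gt0.
have q1 : 0 < 2 * cs <= 2 * cs by apply/andP; split; lra.
have q2 : 0 < cs <= 2 * cs by apply/andP; split; lra.
have q3 : 0 < 2 * cb <= 2 * cb by apply/andP; split; lra.
have q4 : 0 < cb <= 2 * cb by apply/andP; split; lra.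
have [X2s _] := Hs1 _ q1.
have [Xcs _] := Hs1 _ q2.
have [X2b _] := Hb1 _ q3.
have [Xcb _] := Hb1 _ q4.
pose mdk k := - dk k.
have mdc : mdk @ U --> - db := cvgN (FF := PU) dc.
have L1 t := @line_cvg _ _ _ PU (fun k => s k c1) dk (xb c1) db t (Cb c1) dc.
have L2 t := @line_cvg _ _ _ PU (fun k => s k c2) mdk (xb c2) (- db) t (Cb c2) mdc.
have F1 : U [set k | Xpos (s k c1 + (2 * cs) *: dk k)] := ev_Xpos (L1 _) X2s.
have F2 : U [set k | u c1 (s k c1 + cs *: dk k) < u c1 (s k c1 + (2 * cs) *: dk k)] :=
  ev_lt PU (u_cvg PU (ua c1) Xcs (L1 _)) (u_cvg PU (ua c1) X2s (L1 _)) Hs2.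
have F3 : U [set k | Xpos (s k c2 + (2 * cb) *: mdk k)] := ev_Xpos (L2 _) X2b.
have F4 : U [set k | u c2 (s k c2 + cb *: mdk k) < u c2 (s k c2 + (2 * cb) *: mdk k)] :=
  ev_lt PU (u_cvg PU (ua c2) Xcb (L2 _)) (u_cvg PU (ua c2) X2b (L2 _)) Hb2.
have F5 : U [set k | eta < u c1 (s k c1 + c0 *: dk k) - u c1 (s k c1)].
  apply: (ev_lt PU (cvg_cst eta) (cvgB (u_cvg PU (ua c1) Xc0 (L1 _)) (u_cvg PU (ua c1) (Xb c1) (Cb c1)))).
  rewrite /eta; lra.
have F6 : U [set k | \sum_i u i (s k.+1 i) - \sum_i u i (s k i) < eta].
  apply: Uoo; move/cvgrPdist_lt: Vc => /(_ eta eta0).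
  apply: filterS => k; rewrite sub0r normrN.
  exact: le_lt_trans (ler_norm _).
have fI := @filterI _ U PU.
have := fI _ _ Uc (fI _ _ F1 (fI _ _ F2 (fI _ _ F3 (fI _ _ F4 (fI _ _ F5 F6))))).
move=> /(@filter_ex _ _ PU) [k [[E1 E2 E3] [h1 [h2 [h3 [h4 [h5 h6]]]]]]].
have [Ha Hp Hm Enext] := HF k.
rewrite E1 E2 E3 in Hp Hm Enext.
have xpcs : cs <= XP k.
  case: (leP cs (XP k)) => // H; exfalso.
  have c2s : cs <= 2 * cs by lra.
  have := argmax_after (ua c1) Hp (ltW H) c2s h1.
  move: h2 => /= h2; rewrite -/(dk k); lra.
have xmcb : cb <= XM k.
  case: (leP cb (XM k)) => // H; exfalso.
  have c2b : cb <= 2 * cb by lra.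
  have := argmax_after (ua c2) Hm (ltW H) c2b h3.
  move: h4 => /= h4; rewrite -/(dk k) -/(mdk k); lra.
have xi0 : c0 <= Num.min (XP k) (XM k) by rewrite le_min; apply/andP; split; lra.
have xiP : Num.min (XP k) (XM k) <= XP k by rewrite ge_min lexx.
have G := argmax_before (ua c1) (SX k c1) Hp (ltW c00) xi0 xiP.
have GL := gain_le c1 (SM k).
rewrite Enext in GL.
move: h5 h6 => /= h5 h6.
have H7 := le_lt_trans GL h6.
rewrite /dk in h5; clear -G H7 h5; lra.
Qed.
End Main.



Section Helpers.
Variables (R : realType) (n m : nat).
Local Notation B := (bundle R n).
Local Notation St := (state R n m).

Lemma cvg_bigsumB {T : Type} (F : set_system T) {FF : Filter F} (I : Type) (r : seq I)
  (f : I -> T -> B) (l : I -> B) :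
  (forall i, f i @ F --> l i) -> (fun t => \sum_(i <- r) f i t) @ F --> \sum_(i <- r) l i.
Proof.
move=> H; elim: r => [|i r IH].
  have -> : (fun t => \sum_(i <- [::]) f i t) = fun _ => 0 by apply/funext => t; rewrite big_nil.
  by rewrite big_nil; exact: cvg_cst.
have -> : (fun t => \sum_(j <- i :: r) f j t) = (fun t => f i t + \sum_(j <- r) f j t).
  by apply/funext => t; rewrite big_cons.
by rewrite big_cons; apply: cvgD.
Qed.

Lemma refine_cvg {X : topologicalType} (U : set_system nat) (f : nat -> X) (l : X) :
  (forall A, (\forall t \near \oo, A t) -> U A) -> f @ \oo --> l -> f @ U --> l.
Proof. by move=> sub H A HA; apply: sub; apply: H. Qed.

Lemma delta_le_maxprem (delta : premiums R n m) i j : j != ord0 ->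
  (forall i j, j != ord0 -> 0 <= delta i j) -> delta i j <= maxprem delta.
Proof.
move=> j0 dpos; rewrite /maxprem.
apply: le_trans (le_bigmax _ _ i); apply: le_bigmax_cond; exact: j0.
Qed.

Lemma budget_sum (p : 'I_n.+1 -> R) (y : St) :
  budget p (\sum_i y i) = \sum_i budget p (y i).
Proof.
rewrite /budget summxE big_split /=; congr (_ + _).
rewrite exchange_big /=; apply: eq_bigr => j _; rewrite summxE mulr_sumr //.
Qed.

Lemma lim_unique (F : set_system nat) (FF : ProperFilter F) (f : nat -> R) (a b : R) :
  f @ F --> a -> f @ F --> b -> a = b.
Proof.
move=> fa fb; apply/eqP; rewrite eq_le.
have H : F [set k | f k <= f k] by apply: (filterS _ (@filterT _ _ FF)) => k _ /=.
by rewrite (lim_le FF fa fb H) (lim_le FF fb fa H).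
Qed.
End Helpers.

Section PartB.
Variables (R : realType) (n m : nat).
Local Notation B := (bundle R n).
Local Notation St := (state R n m).
Variable (u : 'I_m -> B -> R).
Hypothesis ua : forall i, utility_assumptions (u i).

Lemma cvg_bundle_unique (F : set_system nat) (FF : ProperFilter F) (f : nat -> B) (a b : B) :
  f @ F --> a -> f @ F --> b -> a = b.
Proof.
move=> fa fb; apply/rowP => j.
have ca := continuous_cvg FF (@coord_continuous R 1 n.+1 0 j a) fa.
have cb := continuous_cvg FF (@coord_continuous R 1 n.+1 0 j b) fb.
exact: (lim_unique FF ca cb).
Qed.

Lemma Poo : ProperFilter (\oo : set_system nat). Proof. exact: eventually_filter. Qed.

Lemma part_b (i0 : 'I_m) (x0 : St) (delta : nat -> premiums R n m) (s : nat -> St)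
    (sg : nat -> nat) :
  (forall i, Xpos (x0 i)) ->
  (forall k i j, j != ord0 -> 0 < delta k i j) ->
  (fun k => maxprem (delta k)) @ \oo --> 0 ->
  staged_process u delta x0 s sg ->
  exists (xbar : St) (pbar : 'I_n.+1 -> R),
    [/\ forall i, (fun t => s t i) @ \oo --> xbar i,
        forall i j, j != ord0 -> (fun t => pthr (u i) (s t i) j) @ \oo --> pbar j,
        equilibrium u xbar pbar
      & forall i j, j != ord0 -> pthr (u i) (xbar i) j = pbar j].
Proof.
move=> Xz dpos dcvg [s0 sg0 Hstep].
have Hst : stepish u s.
  move=> t; case: (Hstep t) => [[_ H]|[_ _ H]]; [left; exists (delta (sg t)) | right] => //.
have SP := seq_props ua Xz s0 Hst.
have SX k : forall i, Xpos (s k i) by have [] := SP k.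
have SS k : \sum_i s k i = \sum_i x0 i by have [] := SP k.
have SU k i : u i (x0 i) <= u i (s k i) by have [] := SP k.
have SM k i : u i (s k i) <= u i (s k.+1 i) by have [] := SP k.
pose E := [set t | ~ some_trade_avail u (delta (sg t)) (s t) /\ sg t.+1 = (sg t).+1].
have sgmono t : (sg t <= sg t.+1)%N by case: (Hstep t) => [[-> _]|[_ -> _]].
have sgle : {homo sg : a b / (a <= b)%N}.
  by apply: homo_leq => // a b c; apply: leq_trans.
have Einf : forall N, exists t, (N <= t)%N /\ E t.
  move=> N; apply: contrapT => HN.
  have HL t : (N <= t)%N -> sg t.+1 = sg t /\ trade_step u (delta (sg t)) (s t) (s t.+1).
    move=> Nt; case: (Hstep t) => // -[H1 H2 H3]; exfalso.
    by apply: HN; exists t; split.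
  have Hsg k : sg (N + k)%N = sg N.
    elim: k => [|k IH]; first by rewrite addn0.
    by rewrite addnS (HL _ (leq_addr k N)).1 IH.
  apply: (no_infinite ua (delta := delta (sg N)) (z := s N) (fun i j j0 => dpos _ i j j0) (SX N)).
  exists (fun k => s (N + k)%N); split; first by rewrite addn0.
  move=> k; rewrite addnS; have := (HL _ (leq_addr k N)).2.
  by rewrite Hsg.
have sginf : forall K, exists N, forall t, (N <= t)%N -> (K <= sg t)%N.
  elim => [|K [N HN]]; first by exists 0%N.
  have [t1 [Nt1 [_ Et1]]] := Einf N.
  exists t1.+1 => t t1t; apply: leq_trans (sgle _ _ t1t); rewrite Et1 ltnS.
  exact: HN.
have dz i j : j != ord0 -> (fun t => delta (sg t) i j) @ \oo --> 0.
  move=> j0; apply/cvgrPdist_lt => e e0.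
  move/cvgrPdist_lt: dcvg => /(_ e e0) [K _ HK].
  have [N HN] := sginf K.
  exists N => // t Nt /=; rewrite sub0r normrN gtr0_norm ?dpos //.
  apply: le_lt_trans (delta_le_maxprem _ j0 _) _.
    by move=> i1 j1 j10; apply: ltW; apply: dpos.
  by have := HK _ (HN _ Nt); rewrite /= sub0r normrN => /(le_lt_trans (ler_norm _)).
have [U [UU Uoo UE]] := ultra_exists Einf.
have PU : ProperFilter U := @ultra_proper _ _ UU.
have UA : forall A : set nat, (forall t, A t) -> U A.
  by move=> A HA; apply: Uoo; exists 0%N => // t _; apply: HA.
have Lim i : exists p, Kset u x0 i p /\ (fun k => s k i) @ U --> p.
  have [p Kp cv] := ultra_cvg UU (Kset_compact ua (z := x0) (i := i) (Xz i))
    (UA _ (fun k => in_Kset (SX k) (SS k) (SU k i))).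
  by exists p.
have [xb Hxb] := choice Lim.
have Xb i : Xpos (xb i) by have [[[]]] := Hxb i.
have Cb i : (fun k => s k i) @ U --> xb i by have [] := Hxb i.
have Peq i i' j : j != ord0 -> i != i' -> pthr (u i') (xb i') j <= pthr (u i) (xb i) j.
  move=> j0 ii'.
  have fc := pthr_cvg PU (ua i') (Xb i') (Cb i') (j := j).
  have gc : (fun t => pthr (u i) (s t i) j + delta (sg t) i j + delta (sg t) i' j) @ U -->
      pthr (u i) (xb i) j + 0 + 0.
    have c1 := pthr_cvg PU (ua i) (Xb i) (Cb i) (j := j).
    have c2 := refine_cvg Uoo (dz i j j0).
    have c3 := refine_cvg Uoo (dz i' j j0).
    exact: (cvgD (cvgD c1 c2) c3).
  rewrite !addr0 in gc.
  apply: (lim_le PU fc gc); apply: (filterS _ UE) => t [Hn _] /=.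
  case: (leP (psell u (delta (sg t)) (s t) i j) (pbuy u (delta (sg t)) (s t) i' j)) => H.
    exfalso; apply: Hn; exists i, i', j, (psell u (delta (sg t)) (s t) i j).
    by split => //; [exact: SX | rewrite lexx H].
  by move: H; rewrite /psell /pbuy => H; apply: ltW; lra.
pose pb j := pthr (u i0) (xb i0) j.
have Hp i j : j != ord0 -> pthr (u i) (xb i) j = pb j.
  move=> j0; rewrite /pb; case: (eqVneq i i0) => [->//|ii0].
  apply: le_anti; apply/andP; split; apply: Peq => //; by rewrite eq_sym.
have Ulim i : (fun t => u i (s t i)) @ \oo --> u i (xb i).
  have Vnd : nondecreasing_seq (fun t => u i (s t i)).
    by apply/nondecreasing_seqP => k; apply: SM.
  have Vub : has_ubound (range (fun t => u i (s t i))).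
    exists (u i (x0 i) + \sum_l (\sum_k x0 k) 0 l * partial (u i) l (x0 i)).
    move=> _ [k _ <-]; apply: u_bound => // l; rewrite -(SS k); exact: entry_le_sum.
  have Vc := nondecreasing_cvgn Vnd Vub.
  have E1 := refine_cvg Uoo Vc.
  have E2 := u_cvg PU (ua i) (Xb i) (Cb i).
  by rewrite -(lim_unique PU E1 E2).
have SW : \sum_i xb i = \sum_i x0 i.
  have c1 := cvg_bigsumB (FF := PU) (r := index_enum 'I_m) Cb.
  have c2 : (fun t => \sum_i s t i) @ U --> \sum_i x0 i.
    have -> : (fun t => \sum_i s t i) = fun=> \sum_i x0 i by apply/funext => t; exact: SS.
    exact: cvg_cst.
  exact: (cvg_bundle_unique PU c1 c2).
have Conv i : (fun t => s t i) @ \oo --> xb i.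
  apply: contrapT => Hn.
  have [V [Vn HV]] : exists V, nbhs (xb i) V /\ ~ ((fun t => s t i) @ \oo) V.
    apply: contrapT => H'; apply: Hn => V Vn; apply: contrapT => HV; apply: H'.
    by exists V.
  have Einf' : forall N, exists t, (N <= t)%N /\ ~ V (s t i).
    move=> N; apply: contrapT => HN; apply: HV; exists N => // t Nt /=.
    by apply: contrapT => Ht; apply: HN; exists t.
  have [U' [UU' Uoo' UE']] := ultra_exists Einf'.
  have PU' : ProperFilter U' := @ultra_proper _ _ UU'.
  have UA' : forall A : set nat, (forall t, A t) -> U' A.
    by move=> A HA; apply: Uoo'; exists 0%N => // t _; apply: HA.
  have Lim' i' : exists p, Kset u x0 i' p /\ (fun k => s k i') @ U' --> p.
    have [p Kp cv] := ultra_cvg UU' (Kset_compact ua (z := x0) (i := i') (Xz i'))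
      (UA' _ (fun k => in_Kset (SX k) (SS k) (SU k i'))).
    by exists p.
  have [y Hy] := choice Lim'.
  have Xy i' : Xpos (y i') by have [[[]]] := Hy i'.
  have Cy i' : (fun k => s k i') @ U' --> y i' by have [] := Hy i'.
  have Uy i' : u i' (y i') = u i' (xb i').
    exact: (lim_unique PU' (u_cvg PU' (ua i') (Xy i') (Cy i')) (refine_cvg Uoo' (Ulim i'))).
  have SWy : \sum_i y i = \sum_i x0 i.
    have c1 := cvg_bigsumB (FF := PU') (r := index_enum 'I_m) Cy.
    have c2 : (fun t => \sum_i s t i) @ U' --> \sum_i x0 i.
      have -> : (fun t => \sum_i s t i) = fun=> \sum_i x0 i by apply/funext => t; exact: SS.
      exact: cvg_cst.
    exact: (cvg_bundle_unique PU' c1 c2).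
  have Bge i' : 0 <= budget pb (y i') - budget pb (xb i').
    have := foc_budget (ua i') (Xb i') (Hp i') (Xy i').
    rewrite Uy -{1}(addr0 (u i' (xb i'))) lerD2l pmulr_rge0 //.
    exact: u_gpos.
  have Bsum : \sum_i' (budget pb (y i') - budget pb (xb i')) = 0.
    by rewrite sumrB -!budget_sum SWy SW subrr.
  have Beq := psumr_eq0P (fun i' _ => Bge i') Bsum.
  have yi : y i = xb i.
    apply: (unique_on_budget (ua i) (Xb i) (Hp i) (Xy i)); last by rewrite Uy.
    by apply/eqP; rewrite -subr_eq0; apply/eqP; apply: Beq.
  have := Cy i; rewrite yi => /(_ V Vn) UV.
  have := @filterI _ U' PU' _ _ UV UE'.
  by move=> /(@filter_ex _ _ PU') [t [h1 h2]].
exists xb, pb; split.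
- exact: Conv.
- move=> i j j0; rewrite -(Hp i j j0).
  exact: (pthr_cvg Poo (ua i) (Xb i) (Conv i)).
- move=> i; split; first exact: Xb.
  by move=> x Xx Bx; apply: (max_on_budget (ua i) (Xb i) (Hp i) Xx Bx).
- exact: Hp.
Qed.
End PartB.


Unset Implicit Arguments.

Theorem theorem3 (R : realType) (n m : nat) (u : 'I_m -> bundle R n -> R)
    (x0 : state R n m) :
  (forall i, utility_assumptions (u i)) ->
  (forall i, Xpos (x0 i)) ->
  (* (a) finiteness of any trade sequence for fixed premiums *)
  (forall delta : premiums R n m,
     (forall i j, j != ord0 -> 0 < delta i j) ->
     ~ exists s : nat -> state R n m,
         s 0%N = x0 /\ forall k, trade_step u delta (s k) (s k.+1)) /\
  (* (b) convergence of the staged process to an equilibrium *)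
  (forall (delta : nat -> premiums R n m) (s : nat -> state R n m) (sg : nat -> nat),
     (forall k i j, j != ord0 -> 0 < delta k i j) ->
     (forall k i j, j != ord0 -> delta k.+1 i j <= delta k i j) ->
     (fun k => maxprem (delta k)) @ \oo --> 0 ->
     staged_process u delta x0 s sg ->
     exists (xbar : state R n m) (pbar : 'I_n.+1 -> R),
       [/\ forall i, (fun t => s t i) @ \oo --> xbar i,
           forall i j, j != ord0 -> (fun t => pthr (u i) (s t i) j) @ \oo --> pbar j,
           equilibrium u xbar pbar
         & forall i j, j != ord0 -> pthr (u i) (xbar i) j = pbar j]).
Proof.
Proof.
move=> ua Xz; split.
  by move=> delta dpos; exact: (no_infinite ua dpos Xz).
move=> delta s sg dpos _ dcvg Hsp.
case: (boolP (0 < m)%N) => [m0|m0].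
  exact: (part_b ua (Ordinal m0) Xz dpos dcvg Hsp).
have no : 'I_m -> False by case=> i im; move: m0; rewrite -leqNgt leqn0 => /eqP mz; move: im; rewrite mz.
exists x0, (fun _ => 0); split.
- by move=> i; case: (no i).
- by move=> i; case: (no i).
- by move=> i; case: (no i).
- by move=> i; case: (no i).
Qed.
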